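(* A regular $n$-tournament is $(n-1)$-spectrally monomorphic if and only if it is $(n-1)$-skew-spectrally monomorphic.
   Context: An $n$-tournament is a digraph in which every pair of distinct vertices is joined by exactly one arc. Its adjacency matrix $A=(a_{ij})$ has $a_{ij}=1$ if $v_i$ dominates $v_j$ and $0$ otherwise; its skew-adjacency matrix is $S=A-A^{\top}$. A tournament is regular if all its vertices have the same out-degree. A tournament is $k$-spectrally monomorphic (resp. $k$-skew-spectrally monomorphic) if all $k\times k$ principal submatrices of $A$ (resp. of $S$) have the same characteristic polynomial $\det(zI-M)$. *)

(* Defs.v *)
From mathcomp Require Import all_boot all_order all_algebra.
Set Implicit Arguments. Unset Strict Implicit. Unset Printing Implicit Defensive.
Import GRing.Theory.
Local Open Scope ring_scope.

(* A tournament on vertex set 'I_n: relation [dom i j] = "v_i dominates v_j". *)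
Definition is_tournament (n : nat) (dom : rel 'I_n) : Prop :=
  (forall i, ~~ dom i i) /\
  (forall i j, i != j -> dom i j (+) dom j i).

Definition regular_tournament (n : nat) (dom : rel 'I_n) : Prop :=
  forall i j : 'I_n, #|[set k | dom i k]| = #|[set k | dom j k]|.

Definition adj_mx (n : nat) (dom : rel 'I_n) : 'M[int]_n :=
  \matrix_(i, j) (dom i j)%:R.

Definition skew_mx (n : nat) (dom : rel 'I_n) : 'M[int]_n :=
  adj_mx dom - (adj_mx dom)^T.

Definition principal_submx (R : Type) (n : nat) (M : 'M[R]_n) (S : {set 'I_n})
  : 'M[R]_#|S| :=
  \matrix_(i, j) M (enum_val i) (enum_val j).

Definition k_spec_mono (n k : nat) (M : 'M[int]_n) : Prop :=
  forall S1 S2 : {set 'I_n}, #|S1| = k -> #|S2| = k ->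
    char_poly (principal_submx M S1) = char_poly (principal_submx M S2).

Definition spectrally_monomorphic (n k : nat) (dom : rel 'I_n) : Prop :=
  k_spec_mono k (adj_mx dom).

Definition skew_spectrally_monomorphic (n k : nat) (dom : rel 'I_n) : Prop :=
  k_spec_mono k (skew_mx dom).

(* Main.v *)
Require Import Defs.
From mathcomp Require Import all_boot all_order all_algebra all_fingroup.
From mathcomp Require Import ring lra.
Set Implicit Arguments. Unset Strict Implicit. Unset Printing Implicit Defensive.
Import GRing.Theory Num.Theory.
Local Open Scope ring_scope.

Section Key.
Variable R : idomainType.
Variable n : nat.
Local Notation J := (const_mx 1 : 'M[R]_n).

Lemma JJ : J *m J = n%:R *: J.
Proof.
apply/matrixP=> i j; rewrite !mxE.
under eq_bigr do rewrite !mxE mulr1.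
by rewrite sumr_const card_ord mulr1.
Qed.

Lemma key_identity (N : 'M[R]_n) c s :
  N *m J = c *: J -> J *m N = c *: J ->
  \det (N + s *: J) *: ((c*(c + n%:R*s)) *: \adj N - (s * \det N) *: J)
  = (c*(c+n%:R*s)*\det N) *: \adj (N + s *: J).
Proof.
move=> NJ JN.
set M := N + s *: J.
set Y := (c*(c + n%:R*s)) *: \adj N - (s * \det N) *: J.
have hK : c *: (J *m \adj N) = \det N *: J.
  by rewrite scalemxAl -JN -mulmxA mul_mx_adj mul_mx_scalar.
have MY : M *m Y = (c*(c+n%:R*s)*\det N)%:M.
  rewrite /M /Y mulmxDl !mulmxBr -!scalemxAr -!scalemxAl mul_mx_adj NJ JJ.
  have -> : (c * (c + n%:R * s)) *: (s *: (const_mx 1 *m \adj N)) =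
            (s * ((c + n%:R * s) * \det N)) *: (const_mx 1 : 'M_n).
    rewrite scalerA (_ : c * (c + n%:R * s) * s = s * (c + n%:R * s) * c); last by ring.
    by rewrite -scalerA hK scalerA mulrA.
  rewrite !scalerA scale_scalar_mx -[RHS]addr0 -addrA; congr (_ + _).
  rewrite -!scalerBl -scaleNr -scalerDl.
  match goal with |- ?a *: _ = 0 => have -> : a = 0 by ring end.
  by rewrite scale0r.
have := congr1 (mulmx (\adj M)) MY.
by rewrite mulmxA mul_adj_mx mul_scalar_mx mul_mx_scalar.
Qed.

Lemma key_equiv (N : 'M[R]_n) c s :
  N *m J = c *: J -> J *m N = c *: J ->
  c != 0 -> c + n%:R * s != 0 -> \det N != 0 -> \det (N + s *: J) != 0 ->
  (forall v w, cofactor N v v = cofactor N w w) <->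
  (forall v w, cofactor (N + s *: J) v v = cofactor (N + s *: J) w w).
Proof.
move=> NJ JN c0 cs0 dN0 dM0.
have E (v : 'I_n) := congr1 (fun A : 'M[R]_n => A v v) (key_identity s NJ JN).
have E' : forall v, \det (N + s *: J) * (c * (c + n%:R * s) * cofactor N v v - s * \det N)
   = c * (c + n%:R * s) * \det N * cofactor (N + s *: J) v v.
  by move=> v; have := E v; rewrite /= !mxE mulr1.
have a0 : c * (c + n%:R * s) != 0 by rewrite mulf_neq0.
split=> H v w.
  apply: (mulfI (mulf_neq0 a0 dN0)); by rewrite -!E' (H v w).
apply: (mulfI a0); apply: (addIr (- (s * \det N))); apply: (mulfI dM0).
by rewrite !E' (H v w).
Qed.
End Key.


Section Sub.
Variable R : comPzRingType.

Lemma det_reindex m k (X : 'M[R]_m) (g h : 'I_k -> 'I_m) :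
  injective g -> injective h -> (forall i, exists j, h j = g i) ->
  \det (\matrix_(i, j) X (g i) (g j)) = \det (\matrix_(i, j) X (h i) (h j)).
Proof.
move=> ig ih hex.
pose f i := odflt i [pick j | h j == g i].
have hf i : h (f i) = g i.
  rewrite /f; case: pickP => [j /eqP //|H]; have [j hj] := hex i.
  by have := H j; rewrite hj eqxx.
have fI : injective f by move=> i j e; apply: ig; rewrite -!hf e.
pose s := perm fI.
have -> : \matrix_(i, j) X (g i) (g j) =
          row_perm s (col_perm s (\matrix_(i, j) X (h i) (h j))).
  by apply/matrixP=> i j; rewrite !mxE !permE !hf.
rewrite row_permE col_permE !det_mulmx !det_perm odd_permV.
by rewrite mulrCA -signr_addb addbb expr0 mulr1.
Qed.

Lemma det_cast m k (E : k = m) (B : 'M[R]_m) :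
  \det (\matrix_(i, j) B (cast_ord E i) (cast_ord E j)) = \det B.
Proof.
subst m; congr (\det _); apply/matrixP=> i j; by rewrite mxE !cast_ord_id.
Qed.

Lemma psub_cofactor n' (X : 'M[R]_n'.+1) (v : 'I_n'.+1) :
  \det (principal_submx X [set~ v]) = cofactor X v v.
Proof.
have E : #|[set~ v]| = n' by rewrite cardsC1 card_ord.
rewrite /principal_submx (@det_reindex _ _ _ _ (fun i => lift v (cast_ord E i))).
- rewrite /cofactor -signr_odd oddD addbb expr0 mul1r -(det_cast E).
  by congr (\det _); apply/matrixP=> i j; rewrite !mxE.
- exact: enum_val_inj.
- by move=> i j /lift_inj /cast_ord_inj.
move=> i; have := enum_valP i; rewrite !inE eq_sym => /unlift_some [j -> _].
by exists (cast_ord (esym E) j); rewrite cast_ordKV.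
Qed.
End Sub.


Lemma psub_char (R : nzRingType) n (M : 'M[R]_n) (S : {set 'I_n}) :
  char_poly (principal_submx M S) = \det (principal_submx (char_poly_mx M) S).
Proof.
rewrite /char_poly; congr (\det _); apply/matrixP=> i j.
by rewrite !mxE (inj_eq enum_val_inj).
Qed.

Lemma card_pred_set n' (S : {set 'I_n'.+1}) :
  #|S| = n' -> exists v, S = [set~ v].
Proof.
move=> hS; have : #|~: S| == 1%N.
  have := cardsC S; rewrite card_ord hS => e.
  by apply/eqP; apply: (@addnI n'); rewrite e addn1.
case/cards1P=> v hv; exists v; by rewrite -hv setCK.
Qed.

Lemma spec_iff n' (M : 'M[int]_n'.+1) :
  k_spec_mono n' M <->
  (forall v w : 'I_n'.+1, cofactor (char_poly_mx M) v v = cofactor (char_poly_mx M) w w).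
Proof.
split.
  move=> H v w; rewrite -!psub_cofactor -!psub_char; apply: H;
  by rewrite cardsC1 card_ord.
move=> H S1 S2 /card_pred_set [v ->] /card_pred_set [w ->].
by rewrite !psub_char !psub_cofactor.
Qed.


Lemma transfer n (X : 'M[int]_n) :
  (forall v w : 'I_n, cofactor (char_poly_mx X) v v = cofactor (char_poly_mx X) w w) <->
  (forall v w : 'I_n, cofactor (char_poly_mx (map_mx (intr : int -> rat) X)) v v =
                      cofactor (char_poly_mx (map_mx (intr : int -> rat) X)) w w).
Proof.
have E v : cofactor (char_poly_mx (map_mx (intr : int -> rat) X)) v v =
           map_poly intr (cofactor (char_poly_mx X) v v).
  by rewrite -(map_char_poly_mx (intr : {rmorphism int -> rat})) cofactor_map_mx.
have inj : injective (map_poly (intr : int -> rat)).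
  by apply: map_inj_poly => //; exact: intr_inj.
split=> H v w; rewrite ?E ?(H v w) //.
by apply: inj; rewrite -!E (H v w).
Qed.

Lemma sum_scalar (R : pzRingType) n (x : R) (j : 'I_n) :
  \sum_k (x *+ (k == j)) = x.
Proof.
rewrite (bigD1 j) //= eqxx mulr1n big1 ?addr0 // => k /negPf ->; exact: mulr0n.
Qed.

Lemma cpm_J n (B : 'M[rat]_n) (d : rat) :
  (forall i, \sum_k B i k = d) -> (forall j, \sum_k B k j = d) ->
  char_poly_mx B *m (const_mx 1 : 'M[{poly rat}]_n) = ('X - d%:P) *: const_mx 1 /\
  (const_mx 1 : 'M[{poly rat}]_n) *m char_poly_mx B = ('X - d%:P) *: const_mx 1.
Proof.
move=> hr hc; split; apply/matrixP=> i j; rewrite !mxE.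
  under eq_bigr do rewrite !mxE mulr1.
  rewrite sumrB.
  under eq_bigr do rewrite eq_sym.
  by rewrite sum_scalar -rmorph_sum hr mulr1.
under eq_bigr do rewrite !mxE mul1r.
by rewrite sumrB sum_scalar -rmorph_sum hc mulr1.
Qed.

Section Tour.
Variable n' : nat.
Local Notation n := n'.+1.
Variable dom : rel 'I_n.
Hypothesis hT : is_tournament dom.
Hypothesis hR : regular_tournament dom.

Local Notation Aq := (map_mx (intr : int -> rat) (adj_mx dom)).

Lemma Aq_E i j : Aq i j = (dom i j)%:R.
Proof. by rewrite !mxE rmorph_nat. Qed.

Lemma Aq_sym i j : Aq i j + Aq j i + (i == j)%:R = 1.
Proof.
rewrite !Aq_E; case: (eqVneq i j) => [->|ij].
  by rewrite (negPf (hT.1 j)) !add0r.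
by have := hT.2 i j ij; case: (dom i j); case: (dom j i).
Qed.

Lemma rowsum_card i : \sum_k Aq i k = #|[set k | dom i k]|%:R.
Proof.
under eq_bigr do rewrite Aq_E.
rewrite -natr_sum -sum1_card big_mkcond /=; congr _%:R.
rewrite [RHS]big_mkcond; apply: eq_bigr => k _; rewrite inE; by case: (dom i k).
Qed.

Definition dd := \sum_k Aq ord0 k.

Lemma rowsum i : \sum_k Aq i k = dd.
Proof. by rewrite /dd !rowsum_card (hR i ord0). Qed.

Lemma colsum_aux j : \sum_k Aq k j + dd + 1 = n%:R.
Proof.
have : \sum_(k < n) (Aq k j + Aq j k + (k == j)%:R) = \sum_(k < n) (1 : rat).
  by apply: eq_bigr => k _; exact: Aq_sym.
rewrite !big_split /= sum_scalar sumr_const card_ord (rowsum j).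
by move=> h; exact: h.
Qed.

Lemma colsum j : \sum_k Aq k j = dd.
Proof.
have H : \sum_(j < n) \sum_k Aq k j = \sum_(j < n) \sum_k Aq j k by rewrite exchange_big.
have E j' : \sum_k Aq k j' = n%:R - 1 - dd.
  rewrite -(colsum_aux j'). set x := \sum_k _. set y := dd. 
  by rewrite !addrK.
rewrite (eq_bigr _ (fun j' _ => E j')) in H.
have H2 : \sum_(j < n) \sum_k Aq j k = \sum_(j < n) dd.
  by apply: eq_bigr => k _; exact: rowsum.
rewrite H2 in H. move: H E; generalize dd => D H E.
rewrite !sumr_const card_ord in H.
have H' : (n%:R - 1 - D) * n%:R = D * n%:R by rewrite !mulr_natr.
have n0 : (n%:R : rat) != 0 by rewrite pnatr_eq0.
by rewrite E (mulIf n0 H').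
Qed.
End Tour.

Section Final.
Variable n' : nat.
Local Notation n := n'.+1.
Variable dom : rel 'I_n.
Hypothesis hT : is_tournament dom.
Hypothesis hR : regular_tournament dom.

Local Notation Aq := (map_mx (intr : int -> rat) (adj_mx dom)).
Local Notation Sq := (map_mx (intr : int -> rat) (skew_mx dom)).
Local Notation J := (const_mx 1 : 'M[{poly rat}]_n).
Local Notation s := ((2^-1 : rat)%:P).
Local Notation p0 := ((2 : rat)%:P * 'X + 1).

Lemma skew_rel :
  map_mx (comp_poly p0) (char_poly_mx Sq) = (2 : rat)%:P *: (char_poly_mx Aq + s *: J).
Proof.
apply/matrixP=> i j; rewrite !mxE.
have h := Aq_sym hT i j.
rewrite !mxE in h.
move: h; set a : rat := (dom i j)%:R%:~R; set b : rat := (dom j i)%:R%:~R => h.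
rewrite rmorphB /= -/a -/b mulr1 mulrDr -polyCM divff ?pnatr_eq0 //.
have hb : b = 1 - (i == j)%:R - a by lra.
rewrite comp_polyC rmorphB /= -/a -/b hb.
case: (i == j); rewrite ?mulr1n ?mulr0n ?comp_polyX ?comp_poly0 !polyCB; ring.
Qed.

Lemma skew_cof v :
  (cofactor (char_poly_mx Sq) v v) \Po p0 =
  (2 : rat)%:P ^+ n' * cofactor (char_poly_mx Aq + s *: J) v v.
Proof.
have := cofactor_map_mx (comp_poly p0) (char_poly_mx Sq) v v.
by rewrite /= skew_rel cofactorZ => <-.
Qed.

Lemma size_p0 : size p0 = 2%N.
Proof.
rewrite -polyC1 size_MXaddC size_polyC oner_eq0 andbF /= //.
Qed.

Lemma comp_inj p q : p \Po p0 = q \Po p0 -> p = q.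
Proof.
move/eqP; rewrite -subr_eq0 -comp_polyB comp_poly2_eq0 ?size_p0 // subr_eq0.
by move/eqP.
Qed.

Lemma skew_equiv2 :
  (forall v w : 'I_n, cofactor (char_poly_mx Sq) v v = cofactor (char_poly_mx Sq) w w) <->
  (forall v w : 'I_n, cofactor (char_poly_mx Aq + s *: J) v v =
                      cofactor (char_poly_mx Aq + s *: J) w w).
Proof.
have t0 : (2 : rat)%:P ^+ n' != 0.
  by rewrite expf_neq0 // polyC_eq0 pnatr_eq0.
split=> H v w.
  by apply: (mulfI t0); rewrite -!skew_cof (H v w).
by apply: comp_inj; rewrite !skew_cof (H v w).
Qed.

Lemma main_equiv :
  (forall v w : 'I_n, cofactor (char_poly_mx Aq) v v = cofactor (char_poly_mx Aq) w w) <->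
  (forall v w : 'I_n, cofactor (char_poly_mx Sq) v v = cofactor (char_poly_mx Sq) w w).
Proof.
rewrite skew_equiv2.
have [NJ JN] := cpm_J (rowsum hR) (colsum hT hR).
apply: (key_equiv NJ JN).
- by rewrite -size_poly_eq0 size_XsubC.
- have -> : 'X - (dd dom)%:P + n%:R * s = 'X - (dd dom - n%:R / 2)%:P.
    by rewrite polyCB polyCM polyC_natr; ring.
  by rewrite -size_poly_eq0 size_XsubC.
- exact: monic_neq0 (char_poly_monic _).
have t0 : (2 : rat)%:P ^+ n != 0 by rewrite expf_neq0 // polyC_eq0 pnatr_eq0.
apply/eqP=> D; move: (char_poly_monic Sq) => /monic_neq0.
rewrite -(comp_poly2_eq0 _ size_p0) /char_poly -det_map_mx /= skew_rel detZ D mulr0.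
by rewrite eqxx.
Qed.
End Final.


Lemma k_spec0 k (M : 'M[int]_0) : k_spec_mono k M.
Proof.
move=> S1 S2 _ _; have E : S1 = S2 by apply/setP => -[].
by subst S2.
Qed.

Theorem proposition5p4 (n : nat) (dom : rel 'I_n) :
  is_tournament dom -> regular_tournament dom ->
  (spectrally_monomorphic n.-1 dom <-> skew_spectrally_monomorphic n.-1 dom).
Proof.
case: n dom => [|n'] dom hT hR.
  by split=> _; apply: k_spec0.
rewrite /spectrally_monomorphic /skew_spectrally_monomorphic /= !spec_iff !transfer.
exact: main_equiv.
Qed.
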